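(* Let two independent walkers start at the origin and each take $n\ge1$ steps, each step being $(1,0)$ or $(0,1)$ with probability $1/2$ independently. The probability that their vertex sets have no point in common other than the origin is $\binom{2n}{n}/4^n$.
   Context: The vertex set of a walk $v_0=(0,0),v_1,\dots,v_n$ is $\{v_0,\dots,v_n\}$. *)

(* Defs.v *)
From HB Require Import structures.
From mathcomp Require Import all_boot all_order all_algebra.
Set Implicit Arguments. Unset Strict Implicit. Unset Printing Implicit Defensive.

(* A walk of n steps is encoded by its step sequence s : {ffun 'I_n -> bool};
   true = step (1,0), false = step (0,1). *)
Definition step (b : bool) : nat * nat := if b then (1, 0) else (0, 1).

Definition vtx n (s : {ffun 'I_n -> bool}) (k : nat) : nat * nat :=
  ((\sum_(i < n | i < k) (step (s i)).1)%N, (\sum_(i < n | i < k) (step (s i)).2)%N).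

Definition vset n (s : {ffun 'I_n -> bool}) : seq (nat * nat) :=
  [seq vtx s k | k <- iota 0 n.+1].

Definition only_origin_common n (s1 s2 : {ffun 'I_n -> bool}) : bool :=
  all (fun v => (v \in vset s2) ==> (v == (0, 0)%N)) (vset s1).

(* Uniform probability on the finite sample space of pairs of step sequences
   (all steps independent, each fair). *)
Definition prob_disjoint n : rat :=
  (#|[set p : {ffun 'I_n -> bool} * {ffun 'I_n -> bool} | only_origin_common p.1 p.2]|%:R
   / #|{: {ffun 'I_n -> bool} * {ffun 'I_n -> bool}}|%:R)%R.

(* Main.v *)
Require Import Defs.
From mathcomp Require Import all_boot all_order all_algebra.
From mathcomp Require Import zify ring lra.
Set Implicit Arguments. Unset Strict Implicit. Unset Printing Implicit Defensive.
Import Order.TTheory GRing.Theory Num.Theory.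

Lemma filter_iota_lt k n : [seq i <- iota 0 n | i < k] = iota 0 (minn k n).
Proof.
elim: n => [|n IH]; first by rewrite minn0.
rewrite -addn1 iotaD filter_cat IH /= add0n.
case: (ltnP n k) => h.
  by rewrite addn1 (minn_idPr h) -addn1 iotaD.
by rewrite cats0 (minn_idPl (leq_trans h (leq_addr 1 _))).
Qed.

Lemma sum_take n (F : bool -> nat) (s : {ffun 'I_n -> bool}) k :
  (\sum_(i < n | i < k) F (s i) = \sum_(x <- take k (codom s)) F x)%N.
Proof.
rewrite codomE -map_take big_map -[LHS]big_filter.
have -> : filter (fun x : 'I_n => x < k) (index_enum 'I_n) = take k (enum 'I_n).
  apply: (inj_map val_inj); rewrite map_take val_enum_ord take_iota.
  rewrite -filter_iota_lt -(val_enum_ord n) filter_map.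
  by rewrite /index_enum -enumT.
by [].
Qed.

Lemma size_cod n (s : {ffun 'I_n -> bool}) : size (codom s) = n.
Proof. by rewrite size_codom card_ord. Qed.

Lemma vtx1 n (s : {ffun 'I_n -> bool}) k : (vtx s k).1 = count id (take k (codom s)).
Proof.
rewrite /vtx /= (sum_take (fun b => (step b).1)) -sum1_count [RHS]big_mkcond /=.
by apply: eq_bigr => -[].
Qed.

Lemma vtx12 n (s : {ffun 'I_n -> bool}) k : ((vtx s k).1 + (vtx s k).2)%N = minn k n.
Proof.
rewrite /vtx /= -big_split /= (sum_take (fun b => (step b).1 + (step b).2)%N).
rewrite (eq_bigr (fun _ => 1%N)); last by case.
by rewrite sum1_size size_take_min size_cod.
Qed.

Definition dd (l1 l2 : seq bool) : int := ((count id l1)%:Z - (count id l2)%:Z)%R.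
Definition Good (l1 l2 : seq bool) : bool :=
  all (fun k => dd (take k l1) (take k l2) != 0%R) (iota 1 (size l1)).

Lemma dd_neq a b c d : (dd a b != 0%R) = (count id c != count id d) -> True.
Proof. by []. Qed.

Lemma ooc_Good n (f1 f2 : {ffun 'I_n -> bool}) :
  only_origin_common f1 f2 = Good (codom f1) (codom f2).
Proof.
have ddE k : (dd (take k (codom f1)) (take k (codom f2)) != 0%R) =
             ((vtx f1 k).1 != (vtx f2 k).1).
  by rewrite /dd subr_eq0 !vtx1 eqz_nat.
have veq k : ((vtx f1 k).1 == (vtx f2 k).1) = (vtx f1 k == vtx f2 k).
  apply/eqP/eqP => [e|->] //.
  apply: injective_projections => //.
  have h1 := vtx12 f1 k; have h2 := vtx12 f2 k.
  by rewrite e -h2 in h1; apply: addnI h1.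
rewrite /only_origin_common /Good size_cod.
apply/allP/allP => [H k kin|H v /mapP [k kin ->]].
  rewrite ddE veq; apply/negP => /eqP e.
  move: kin; rewrite mem_iota add1n ltnS => /andP [k1 kn].
  have vin1 : vtx f1 k \in vset f1 by apply: map_f; rewrite mem_iota leq0n add0n ltnS.
  have vin2 : vtx f1 k \in vset f2 by rewrite e; apply: map_f; rewrite mem_iota leq0n add0n ltnS.
  have := H _ vin1; rewrite vin2 /= => /eqP e0.
  have := vtx12 f1 k; rewrite e0 /= (minn_idPl kn) => h.
  by rewrite -h in k1.
move: kin; rewrite mem_iota leq0n add0n ltnS /= => kn.
apply/implyP => /mapP [j jin] e.
move: jin; rewrite mem_iota leq0n add0n ltnS /= => jn.
have kj : k = j.
  have := vtx12 f1 k; have := vtx12 f2 j; rewrite e (minn_idPl kn) (minn_idPl jn) => h1 h2.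
  exact: etrans (esym h2) h1.
rewrite -kj in e; clear kj jn.
case: k kn e => [|k] kn e.
  apply/eqP; apply: injective_projections; rewrite ?vtx1 ?take0 //=.
  by apply: big_pred0 => i; rewrite ltn0.
have kin : k.+1 \in iota 1 n by rewrite mem_iota add1n ltnS; exact: kn.
by have := H _ kin; rewrite ddE veq e eqxx.
Qed.

Fixpoint allseq n : seq (seq bool) :=
  if n is n'.+1 then [seq rcons s b | s <- allseq n', b <- [:: true; false]]
  else [:: [::]].

Lemma mem_allseq n s : (s \in allseq n) = (size s == n).
Proof.
elim: n s => [|n IH] s; first by case: s.
apply/allpairsP/idP => [[[s' b] [/= h1 _ ->]]|].
  by rewrite size_rcons eqSS -IH.
case/lastP: s => [//|s b]; rewrite size_rcons eqSS => h.
by exists (s, b); split => //=; [rewrite IH | case: b].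
Qed.

Lemma uniq_allseq n : uniq (allseq n).
Proof.
elim: n => [//|n IH].
apply: allpairs_uniq => // -[s1 b1] [s2 b2] _ _ /=.
exact: rcons_inj.
Qed.

Lemma sum_ffun_allseq n (F : seq bool -> nat) :
  (\sum_(f : {ffun 'I_n -> bool}) F (codom f) = \sum_(s <- allseq n) F s)%N.
Proof.
rewrite -(big_map (fun f : {ffun 'I_n -> bool} => codom f) xpredT).
apply: perm_big; apply: uniq_perm.
- rewrite map_inj_uniq ?index_enum_uniq // => f g e.
  apply/ffunP => i; have := congr1 (nth false ^~ (enum_rank i)) e.
  by rewrite !nth_codom enum_rankK.
- exact: uniq_allseq.
move=> s; rewrite mem_allseq; apply/mapP/eqP => [[f _ ->]|hs].
  exact: size_cod.
exists [ffun i : 'I_n => nth false s i]; first by rewrite mem_index_enum.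
rewrite codomE.
have -> : [seq [ffun i : 'I_n => nth false s i] i | i <- enum 'I_n] = [seq nth false s i | i <- map val (enum 'I_n)].
  by rewrite -map_comp; apply: eq_map => i /=; rewrite ffunE.
by rewrite val_enum_ord -hs map_nth_iota0 // take_size.
Qed.

Local Open Scope ring_scope.

Lemma dd_rcons s1 s2 b1 b2 :
  dd (rcons s1 b1) (rcons s2 b2) = dd s1 s2 + (b1 : nat)%:Z - (b2 : nat)%:Z.
Proof.
rewrite /dd -!cats1 !count_cat /= !addn0 !PoszD; ring.
Qed.

Lemma Good_rcons s1 s2 b1 b2 : size s1 = size s2 ->
  Good (rcons s1 b1) (rcons s2 b2) =
  Good s1 s2 && (dd (rcons s1 b1) (rcons s2 b2) != 0).
Proof.
move=> hs; rewrite /Good size_rcons -(addn1 (size s1)) iotaD all_cat /= andbT add1n.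
rewrite !take_oversize ?size_rcons ?hs //; congr andb.
apply: eq_in_all => k; rewrite mem_iota add1n ltnS => /andP [_ kn].
by rewrite -!cats1 !takel_cat // hs.
Qed.

Lemma K_ind (x d a b : int) :
  ((x + a - b != 0) && (x + a - b == d))
  = (d != 0) && (x == d - (a - b)).
Proof.
rewrite -addrA (_ : (x == d - _) = (x + (a - b) == d)); last first.
  by apply/eqP/eqP => [->|<-]; rewrite ?subrK ?addrK.
set c := (_ - _)%R.
by case: (eqVneq (x + c) d) => [->|ne]; rewrite ?eqxx ?andbT ?andbF.
Qed.

Lemma step_pt s1 s2 d : size s1 = size s2 ->
  \sum_(b1 <- [:: true; false]) \sum_(b2 <- [:: true; false])
     ((Good (rcons s1 b1) (rcons s2 b2) && (dd (rcons s1 b1) (rcons s2 b2) == d)) : nat)%:R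
  = (d != 0)%:R * ((Good s1 s2 && (dd s1 s2 == d - 1))%:R
     + 2 * (Good s1 s2 && (dd s1 s2 == d))%:R + (Good s1 s2 && (dd s1 s2 == d + 1))%:R) :> int.
Proof.
move=> hs; rewrite !big_cons !big_nil !Good_rcons // !dd_rcons.
case: (Good s1 s2) => /=; last by rewrite !(addr0, mulr0).
rewrite !K_ind /= subrr !subr0 !sub0r opprK.
case: (d != 0) => /=; last by rewrite !addr0 mul0r.
rewrite mul1r; ring.
Qed.

Definition A n d : int :=
  \sum_(s1 <- allseq n) \sum_(s2 <- allseq n) (Good s1 s2 && (dd s1 s2 == d))%:R.

Lemma allseqS n : allseq n.+1 = flatten [seq [seq rcons s b | b <- [:: true; false]] | s <- allseq n].
Proof. by []. Qed.

Lemma A_rec n d : A n.+1 d = (d != 0)%:R * (A n (d-1) + 2 * A n d + A n (d+1)).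
Proof.
rewrite /A allseqS big_flatten /= big_map.
under eq_bigr => s1 _ do under eq_bigr => i _ do rewrite big_flatten /= big_map.
under eq_bigr => s1 _ do rewrite exchange_big /=.
rewrite !mulr_sumr -!big_split /= mulr_sumr.
apply: eq_big_seq => s1 h1.
rewrite !mulr_sumr -!big_split /= mulr_sumr.
apply: eq_big_seq => s2 h2.
rewrite -step_pt; last by move: h1 h2; rewrite !mem_allseq => /eqP -> /eqP ->.
by rewrite !big_cons !big_nil.
Qed.

Definition G k j : int := ('C(2*k+1, k+j))%:R - ('C(2*k+1, k+j+1))%:R.

Lemma G0 k : G k 0 = 0.
Proof.
have e : (2*k+1 - (k+1) = k)%N by lia.
have h : 'C(2*k+1, k) = 'C(2*k+1, k+1).
  by rewrite -[X in 'C(_, X) = _]e bin_sub //; lia.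
by rewrite /G addn0 h subrr.
Qed.

Lemma bin2 n m : 'C(n.+2, m.+2) = ('C(n, m) + 2 * 'C(n, m.+1) + 'C(n, m.+2))%N.
Proof. rewrite !binS; lia. Qed.

Lemma G_rec k j : G k.+1 j.+1 = G k j + 2 * G k j.+1 + G k j.+2.
Proof.
rewrite /G.
have e1 : (2 * k.+1 + 1 = (2*k+1).+2)%N by lia.
have e2 : (k.+1 + j.+1 = (k+j).+2)%N by lia.
have e3 : (k.+1 + j.+1 + 1 = (k+j).+3)%N by lia.
have e4 : (k + j.+1 = (k+j).+1)%N by lia.
have e5 : (k + j.+1 + 1 = (k+j).+2)%N by lia.
have e6 : (k + j.+2 = (k+j).+2)%N by lia.
have e7 : (k + j.+2 + 1 = (k+j).+3)%N by lia.
have e8 : (k + j + 1 = (k+j).+1)%N by lia.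
rewrite e1 e3 e2 e5 e4 e7 e6 e8 !bin2 !natrD; ring.
Qed.

Lemma A0 d : A 0 d = (d == 0)%:R.
Proof. by rewrite /A /= !big_cons !big_nil /Good /dd /= subrr !addr0 eq_sym. Qed.

Lemma A_formula k d : A k.+1 d = G k `|d|%N.
Proof.
elim: k d => [|k IH] d.
  rewrite A_rec !A0 /G.
  case: d => [[|[|j]]|[|j]] /=; try by [].
rewrite A_rec !IH.
case: d => [[|j]|j] /=.
- by rewrite mul0r G0.
- by rewrite mul1r subn1 addn1 /= G_rec.
have h : absz (Negz j + 1) = j.
  by rewrite NegzE -addn1 PoszD opprD subrK abszN.
by rewrite h addn0 mul1r G_rec; ring.
Qed.

Fixpoint Rg m : seq int := if m is m'.+1 then Posz m :: - Posz m :: Rg m' else [:: 0].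

Lemma mem_Rg m x : (x \in Rg m) = (absz x <= m)%N.
Proof.
elim: m => [|m IH] /=; first by rewrite inE; case: x => [[|]|].
rewrite !inE IH; apply/idP/idP; lia.
Qed.

Lemma uniq_Rg m : uniq (Rg m).
Proof.
elim: m => [//|m IH] /=; rewrite IH !inE !mem_Rg andbT; lia.
Qed.

Lemma sum_Rg k m : \sum_(d <- Rg m) G k (absz d) =
  2 * (('C(2*k+1, k+1))%:R - ('C(2*k+1, k+m+1))%:R).
Proof.
elim: m => [|m IH]; first by rewrite /= big_cons big_nil G0 addn0 subrr; ring.
rewrite /= !big_cons IH abszN /G /=.
have -> : (k + m.+1 = k + m + 1)%N by lia.
ring.
Qed.

Lemma Good_sum n s1 s2 : s1 \in allseq n -> s2 \in allseq n ->
  (Good s1 s2)%:R = \sum_(d <- Rg n) (Good s1 s2 && (dd s1 s2 == d))%:R :> int.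
Proof.
rewrite !mem_allseq => /eqP h1 /eqP h2.
case: (Good s1 s2) => /=; last by rewrite big1.
have hin : dd s1 s2 \in Rg n.
  have c1 : (count id s1 <= n)%N by rewrite -h1 count_size.
  have c2 : (count id s2 <= n)%N by rewrite -h2 count_size.
  rewrite mem_Rg /dd; lia.
rewrite (big_rem _ hin) /= eqxx big1_seq ?addr0 // => d /andP [_ hd].
move: hd; rewrite mem_rem_uniq ?uniq_Rg // inE => /andP [hd _].
by rewrite eq_sym (negbTE hd).
Qed.

Lemma total n : \sum_(s1 <- allseq n) \sum_(s2 <- allseq n) (Good s1 s2)%:R
  = \sum_(d <- Rg n) A n d :> int.
Proof.
transitivity (\sum_(s1 <- allseq n) \sum_(s2 <- allseq n)
   \sum_(d <- Rg n) (Good s1 s2 && (dd s1 s2 == d))%:R : int).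
  apply: eq_big_seq => s1 h1; apply: eq_big_seq => s2 h2.
  exact: Good_sum.
rewrite /A; under eq_bigr => s1 _ do rewrite exchange_big.
by rewrite exchange_big.
Qed.

Lemma total_closed k : \sum_(s1 <- allseq k.+1) \sum_(s2 <- allseq k.+1) (Good s1 s2)%:R
  = ('C(2 * k.+1, k.+1))%:R :> int.
Proof.
rewrite total.
under eq_bigr => d _ do rewrite A_formula.
rewrite sum_Rg (@bin_small (2*k+1) (k + k.+1 + 1)); last by lia.
have -> : (2 * k.+1 = (2 * k + 1).+1)%N by lia.
rewrite binS -(addn1 k).
have -> : 'C(2 * k + 1, k) = 'C(2 * k + 1, k + 1).
  have e : (2*k+1 - (k+1) = k)%N by lia.
  by rewrite -[X in 'C(_, X) = _]e bin_sub //; lia.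
rewrite subr0 natrD; ring.
Qed.

Lemma card_good n :
  #|[set p : {ffun 'I_n -> bool} * {ffun 'I_n -> bool} | only_origin_common p.1 p.2]|
  = (\sum_(s1 <- allseq n) \sum_(s2 <- allseq n) (Good s1 s2 : nat))%N.
Proof.
rewrite -sum1dep_card big_mkcond /=.
rewrite -(pair_bigA _ (fun f1 f2 => if only_origin_common f1 f2 then 1%N else 0%N)) /=.
rewrite -(sum_ffun_allseq n (fun s1 => (\sum_(s2 <- allseq n) (Good s1 s2 : nat))%N)).
apply: eq_bigr => f1 _.
rewrite -(sum_ffun_allseq n (fun s2 => (Good (codom f1) s2 : nat))).
apply: eq_bigr => f2 _.
by rewrite ooc_Good; case: (Good _ _).
Qed.

Local Close Scope ring_scope.

Theorem corollary2 (n : nat) (hn : (1 <= n)%N) :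
  prob_disjoint n = ('C(2 * n, n)%:R / (4 ^ n)%:R)%R.
Proof.
case: n hn => [//|k] _.
have hc : #|[set p : {ffun 'I_k.+1 -> bool} * {ffun 'I_k.+1 -> bool} | only_origin_common p.1 p.2]|
   = 'C(2 * k.+1, k.+1).
  apply/eqP; rewrite -eqz_nat -!natz card_good natr_sum.
  under eq_bigr => s1 _ do rewrite natr_sum.
  by rewrite total_closed.
rewrite /prob_disjoint hc card_prod !card_ffun card_bool card_ord -expnMn.
by [].
Qed.
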